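(* Every state $\rho\in\mathrm{co}(\mathcal U)$ satisfies $|\rho_{ij}|\le\min\{\rho_{ii},\rho_{jj}\}$ for all pairs of indices $i,j$. Consequently, the only pure states in $\mathrm{co}(\mathcal U)$ are the uniformly coherent ones.
   Context: Fixed computational basis $\{|i\rangle\}_{i=1}^d$. $\mathcal U_k$ is the set of uniformly coherent states $|\Psi\rangle=k^{-1/2}\sum_{j\in J}e^{i\theta_j}|j\rangle$, $|J|=k$, $\theta_j\in\mathbb R$; $\mathcal U=\bigcup_{k=1}^d\mathcal U_k$ (as density matrices), and $\mathrm{co}(\mathcal U)$ its convex hull. A pure state is uniformly coherent if it lies in $\mathcal U$. *)

(* Defs.v *)
From HB Require Import structures.
From mathcomp Require Import all_boot all_order all_algebra.
From mathcomp Require Import reals trigo.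
From mathcomp Require Import complex.
Set Implicit Arguments. Unset Strict Implicit. Unset Printing Implicit Defensive.
Import Order.TTheory GRing.Theory Num.Theory.
Local Open Scope ring_scope.
Local Open Scope complex_scope.

Section Defs.
Variables (R : realType) (d : nat).

Definition expi (t : R) : R[i] := (cos t) +i* (sin t).

Definition adj m n (A : 'M[R[i]]_(m, n)) : 'M[R[i]]_(n, m) := (map_mx Num.conj A)^T.

Definition proj (psi : 'cV[R[i]]_d) : 'M[R[i]]_d := psi *m adj psi.

Definition unif_vec (J : {set 'I_d}) (theta : 'I_d -> R) : 'cV[R[i]]_d :=
  \col_j (if j \in J then ((Num.sqrt (#|J|%:R : R))^-1)%:C * expi (theta j) else 0).

Definition in_U (rho : 'M[R[i]]_d) : Prop :=
  exists (J : {set 'I_d}) (theta : 'I_d -> R),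
    (1 <= #|J| <= d)%N /\ rho = proj (unif_vec J theta).

Definition in_coU (rho : 'M[R[i]]_d) : Prop :=
  exists (n : nat) (w : 'I_n -> R) (sigma : 'I_n -> 'M[R[i]]_d),
    (forall l, 0 <= w l) /\ \sum_l w l = 1 /\ (forall l, in_U (sigma l)) /\
    rho = \sum_l (w l)%:C *: sigma l.

Definition unit_vec (psi : 'cV[R[i]]_d) : Prop :=
  \sum_j `|psi j 0| ^+ 2 = 1.

End Defs.

(* Main.v *)
Require Import Defs.
From HB Require Import structures.
From mathcomp Require Import all_boot all_order all_algebra.
From mathcomp Require Import reals trigo.
From mathcomp Require Import complex.
From mathcomp Require Import lra.
Import Order.TTheory GRing.Theory Num.Theory.
Local Open Scope ring_scope.
Local Open Scope complex_scope.

Definition angle (R : realType) (z : R[i]) : R :=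
  if 0 <= complex.Im z then acos (complex.Re z) else - acos (complex.Re z).

Arguments angle {R}.
Lemma expi_angle (R : realType) (z : R[i]) : `|z| = 1 -> expi (angle z) = z.
Proof.
case: z => a b; rewrite normc_def /angle /= => -[] h.
have h2 : a ^+ 2 + b ^+ 2 = 1.
  by rewrite -[LHS]sqr_sqrtr ?h ?expr1n // addr_ge0 // sqr_ge0.
have ha : -1 <= a <= 1 by apply/andP; split; nra.
have hs : Num.sqrt (1 - a ^+ 2) = `|b| by rewrite -h2 addrAC subrr add0r sqrtr_sqr.
have [hb|hb] := leP 0 b.
  by rewrite /expi acosK ?sin_acos // ?hs ?ger0_norm.
by rewrite /expi cosN sinN acosK ?sin_acos // ?hs ?ltr0_norm ?opprK.
Qed.

Lemma norm_expi (R : realType) (t : R) : `|expi t| = 1.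
Proof.
by rewrite normc_def /= cos2Dsin2 sqrtr1.
Qed.

Lemma proj_entry (R : realType) d (v : 'cV[R[i]]_d) i j :
  proj v i j = v i 0 * Num.conj (v j 0).
Proof. by rewrite /proj /adj !mxE big_ord1 !mxE. Qed.

Lemma two_val (R : realType) (c x y : R[i]) : 0 <= c ->
  (`|x| = 0 \/ `|x| = c) -> (`|y| = 0 \/ `|y| = c) ->
  `|x * Num.conj y| <= x * Num.conj x.
Proof.
rewrite -normCK normrM norm_conjC => hc hx hy.
case: hx => ->; first by rewrite mul0r expr0n.
case: hy => ->; first by rewrite mulr0 exprn_ge0.
by rewrite expr2.
Qed.

Lemma norm_unif (R : realType) d (J : {set 'I_d}) theta i :
  `|unif_vec J theta i 0| = 0 \/ `|unif_vec J theta i 0| = ((Num.sqrt (#|J|%:R : R))^-1)%:C.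
Proof.
rewrite /unif_vec mxE; case: (i \in J); last by left; rewrite normr0.
right; rewrite normrM norm_expi mulr1 ger0_norm // ler0c invr_ge0 sqrtr_ge0 //.
Qed.

Lemma U_bound (R : realType) d (sigma : 'M[R[i]]_d) : in_U sigma ->
  forall i j, `|sigma i j| <= sigma i i /\ `|sigma i j| <= sigma j j.
Proof.
move=> [J [theta [_ ->]]] i j; rewrite !proj_entry; split.
  apply: two_val; last exact: norm_unif; last exact: norm_unif.
  by rewrite ler0c invr_ge0 sqrtr_ge0.
rewrite -norm_conjC rmorphM /= conjCK mulrC.
apply: two_val; last exact: norm_unif; last exact: norm_unif.
by rewrite ler0c invr_ge0 sqrtr_ge0.
Qed.

Lemma coU_bound (R : realType) d (rho : 'M[R[i]]_d) : in_coU rho ->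
  forall i j, `|rho i j| <= rho i i /\ `|rho i j| <= rho j j.
Proof.
move=> [n [w [sigma [w0 [_ [hU ->]]]]]] i j; rewrite !summxE.
have hn : `|\sum_l ((w l)%:C *: sigma l) i j| <= \sum_l (w l)%:C * `|sigma l i j|.
  apply: le_trans (ler_norm_sum _ _ _) _; apply: ler_sum => l _.
  by rewrite mxE normrM ger0_norm // ler0c.
split; apply: le_trans hn _; apply: ler_sum => l _; rewrite mxE;
  apply: ler_wpM2l; rewrite ?ler0c //; have := @U_bound _ _ _ (hU l) i j; case.
 by [].
by [].
Qed.

Theorem lemma12 (R : realType) (d : nat) :
  (forall rho : 'M[R[i]]_d, in_coU rho ->
     forall i j : 'I_d, `|rho i j| <= rho i i /\ `|rho i j| <= rho j j) /\
  (forall psi : 'cV[R[i]]_d, unit_vec psi ->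
     in_coU (proj psi) -> in_U (proj psi)).
Proof.
split; first exact: coU_bound.
move=> psi hu hco.
have hb := @coU_bound _ _ _ hco.
set J := [set j | psi j 0 != 0].
have hle : forall i j, i \in J -> `|psi j 0| <= `|psi i 0|.
  move=> i j; rewrite inE => hi; have [h _] := hb i j.
  move: h; rewrite !proj_entry normrM norm_conjC -normCK expr2 ler_pM2l //.
  by rewrite normr_gt0.
have hnorm : forall i j, i \in J -> j \in J -> `|psi i 0| = `|psi j 0|.
  by move=> i j hi hj; apply/eqP; rewrite eq_le !hle.
have hout : forall j, j \notin J -> psi j 0 = 0.
  by move=> j; rewrite inE negbK => /eqP.
case: (set_0Vmem J) => [J0|[j0 hj0]].
  move: hu; rewrite /unit_vec big1 => [/eqP|j _]; first by rewrite eq_sym oner_eq0.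
  by rewrite hout ?normr0 ?expr0n // J0 inE.
set a := `|psi j0 0|.
have hsum : #|J|%:R * a ^+ 2 = 1.
  rewrite -[RHS]hu /unit_vec (eq_bigr (fun j => if j \in J then a ^+ 2 else 0)).
    by rewrite -big_mkcond /= sumr_const mulr_natl.
  move=> j _; case: ifP => hj; first by rewrite /a (hnorm j0 j).
  by rewrite hout ?hj // normr0 expr0n.
have [r ar] : exists r, a = r%:C by apply/complex_realP; rewrite normr_real.
have r0 : 0 <= r by rewrite -ler0c -ar normr_ge0.
have hk : #|J|%:R * r ^+ 2 = 1.
  by apply: complexI; rewrite rmorphM rmorphXn /= -ar rmorph_nat hsum.
have kpos : (0 < #|J|)%N by apply/card_gt0P; exists j0.
have hr : r = (Num.sqrt (#|J|%:R : R))^-1.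
  rewrite -sqrtrV ?ler0n // -[LHS]ger0_norm // -sqrtr_sqr; congr Num.sqrt.
  have k0 : (#|J|%:R : R) != 0 by rewrite pnatr_eq0 -lt0n.
  by apply: (mulfI k0); rewrite hk mulfV.
have a0 : a != 0 by rewrite normr_eq0; move: hj0; rewrite inE.
exists J, (fun i => angle (psi i 0 / a)); split.
  by rewrite kpos /= -[X in (_ <= X)%N](card_ord d) max_card.
congr proj; apply/matrixP => i k; rewrite (ord1 k) !mxE; case: ifP => hi.
  rewrite expi_angle; last first.
    by rewrite normrM normfV normr_id -(hnorm j0 i) // mulfV.
  by rewrite -hr -ar mulrC divfK.
by rewrite hout ?hi.
Qed.
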